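(* Let $\mathcal L$ be an expansion of the language of ordered groups and let $G$ be an $\mathcal L$-structure whose reduct is a densely ordered abelian group which is definably complete. Fix an $\mathcal L$-formula $\psi(t,y)$ (possibly with parameters) such that each set $\psi(t,G)$, $t\in G$, is pseudo-finite, $\psi(t_1,G)\subseteq\psi(t_2,G)$ whenever $t_1<t_2$, and $\bigcup_{t\in G}\psi(t,G)=G$. Then for all $a<b$ in $G$, the interval $[a,b]$ is definably compact (with respect to $\psi$): for every $\mathcal L$-formula $\varphi(x,y)$ (with parameters) such that each $\varphi(u,G)$, $u\in G$, is open and $[a,b]\subseteq\bigcup_{u\in G}\varphi(u,G)$, there exists $t_0\in G$ with $[a,b]\subseteq\bigcup_{u\in\psi(t_0,G)}\varphi(u,G)$.
   Context: Definable means definable by an $\mathcal L$-formula with parameters from $G$; for a formula $\varphi(x,y)$ and $a\in G$, $\varphi(a,G)=\{b\in G: G\models\varphi(a,b)\}$. $G$ carries the order topology (base: open intervals). A Dedekind cut is a nonempty downward closed subset of $G$; a gap is a cut $C\ne G$ with no least upper bound in $G$; $G$ is definably complete if it has no definable gap. A definable subset $D\subseteq G$ is pseudo-finite if it is discrete, closed, and bounded. *)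

(* Defs.v *)
From Stdlib Require Import Arith.

Set Implicit Arguments.

Record DOAG (G : Type) (add : G -> G -> G) (opp : G -> G) (zero : G)
    (lt : G -> G -> Prop) : Prop := {
  doag_addA : forall x y z, add x (add y z) = add (add x y) z;
  doag_addC : forall x y, add x y = add y x;
  doag_add0 : forall x, add x zero = x;
  doag_addN : forall x, add x (opp x) = zero;
  doag_irrefl : forall x, ~ lt x x;
  doag_trans : forall x y z, lt x y -> lt y z -> lt x z;
  doag_total : forall x y, lt x y \/ x = y \/ lt y x;
  doag_compat : forall x y z, lt x y -> lt (add x z) (add y z);
  doag_dense : forall x y, lt x y -> exists z, lt x z /\ lt z y
}.

Definition upd (G : Type) (s : nat -> G) (i : nat) (g : G) : nat -> G :=
  fun j => if Nat.eqb j i then g else s j.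

(* [Def] is the family of all sets definable (with parameters) in some
   expansion of the language of ordered groups.  A definable set is given as a
   predicate on assignments s : nat -> G that depends only on finitely many
   variables.  The closure conditions are exactly those of the collection of
   sets defined by first-order formulas with parameters (atomic formulas of the
   ordered-group language, parameters, negation, conjunction, existential
   quantification); conversely any such collection is the collection of
   definable sets of the expansion naming all its members. *)
Record DefStructure (G : Type) (add : G -> G -> G) (opp : G -> G)
    (lt : G -> G -> Prop) (Def : ((nat -> G) -> Prop) -> Prop) : Prop := {
  def_finsupp : forall A, Def A -> exists n, forall s s' : nat -> G,
      (forall i, i < n -> s i = s' i) -> (A s <-> A s');
  def_ext : forall A B, (forall s, A s <-> B s) -> Def A -> Def B;
  def_not : forall A, Def A -> Def (fun s => ~ A s);
  def_and : forall A B, Def A -> Def B -> Def (fun s => A s /\ B s);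
  def_exists : forall A i, Def A -> Def (fun s => exists g, A (upd s i g));
  def_eq : forall i j, Def (fun s => s i = s j);
  def_const : forall i (c : G), Def (fun s => s i = c);
  def_lt : forall i j, Def (fun s => lt (s i) (s j));
  def_add : forall i j k, Def (fun s => add (s i) (s j) = s k);
  def_opp : forall i j, Def (fun s => opp (s i) = s j)
}.

Definition def_set (G : Type) (Def : ((nat -> G) -> Prop) -> Prop)
  (C : G -> Prop) : Prop := Def (fun s => C (s 0)).

Definition le_of (G : Type) (lt : G -> G -> Prop) (x y : G) : Prop :=
  lt x y \/ x = y.

Definition is_open (G : Type) (lt : G -> G -> Prop) (U : G -> Prop) : Prop :=
  forall x, U x -> exists c d, lt c x /\ lt x d /\
    (forall y, lt c y -> lt y d -> U y).

Definition is_closed (G : Type) (lt : G -> G -> Prop) (D : G -> Prop) : Prop :=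
  is_open lt (fun x => ~ D x).

Definition is_discrete (G : Type) (lt : G -> G -> Prop) (D : G -> Prop) : Prop :=
  forall x, D x -> exists c d, lt c x /\ lt x d /\
    (forall y, lt c y -> lt y d -> D y -> y = x).

Definition is_bounded (G : Type) (lt : G -> G -> Prop) (D : G -> Prop) : Prop :=
  exists c d, forall x, D x -> le_of lt c x /\ le_of lt x d.

Definition pseudo_finite (G : Type) (lt : G -> G -> Prop)
  (Def : ((nat -> G) -> Prop) -> Prop) (D : G -> Prop) : Prop :=
  def_set Def D /\ is_discrete lt D /\ is_closed lt D /\ is_bounded lt D.

Definition is_cut (G : Type) (lt : G -> G -> Prop) (C : G -> Prop) : Prop :=
  (exists x, C x) /\ (forall x y, C y -> le_of lt x y -> C x).

Definition is_lub (G : Type) (lt : G -> G -> Prop) (C : G -> Prop) (m : G)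
  : Prop :=
  (forall x, C x -> le_of lt x m) /\
  (forall m', (forall x, C x -> le_of lt x m') -> le_of lt m m').

Definition is_gap (G : Type) (lt : G -> G -> Prop) (C : G -> Prop) : Prop :=
  is_cut lt C /\ (exists x, ~ C x) /\ ~ (exists m, is_lub lt C m).

Definition definably_complete (G : Type) (lt : G -> G -> Prop)
  (Def : ((nat -> G) -> Prop) -> Prop) : Prop :=
  forall C, def_set Def C -> ~ is_gap lt C.

(* Main.v *)
Require Import Defs.
From Stdlib Require Import Classical Arith.

Section Aux.
End Aux.

Lemma d_or G add opp lt Def (H : @DefStructure G add opp lt Def) A B :
  Def A -> Def B -> Def (fun s => A s \/ B s).
Proof.
  intros HA HB.
  apply (def_ext H (fun s => ~ (~ A s /\ ~ B s))).
  - intro s; split; [intro h; apply NNPP; tauto | tauto].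
  - apply (def_not H), (def_and H); apply (def_not H); assumption.
Qed.

Lemma d_imp G add opp lt Def (H : @DefStructure G add opp lt Def) A B :
  Def A -> Def B -> Def (fun s => A s -> B s).
Proof.
  intros HA HB.
  apply (def_ext H (fun s => ~ (A s /\ ~ B s))).
  - intro s; split; [intro h; intro a; apply NNPP; tauto | tauto].
  - apply (def_not H), (def_and H); [|apply (def_not H)]; assumption.
Qed.

Lemma d_forall G add opp lt Def (H : @DefStructure G add opp lt Def) A i :
  Def A -> Def (fun s => forall g, A (upd s i g)).
Proof.
  intros HA.
  apply (def_ext H (fun s => ~ exists g, ~ A (upd s i g))).
  - intro s; split.
    + intros h g; apply NNPP; intro hn; apply h; exists g; exact hn.
    + intros h [g hg]; apply hg, h.
  - apply (def_not H), (def_exists H (fun s => ~ A s) i), (def_not H), HA.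
Qed.

Lemma d_ren G add opp lt Def (H : @DefStructure G add opp lt Def)
  (R : G -> G -> Prop) i j k l :
  i <> j -> k <> i -> k <> j -> l <> i -> l <> j ->
  Def (fun s => R (s i) (s j)) -> Def (fun s => R (s k) (s l)).
Proof.
  intros hij hki hkj hli hlj HR.
  apply (def_ext H (fun s => exists g1, exists g2,
     (fun s'' => s'' i = s'' k /\ s'' j = s'' l /\ R (s'' i) (s'' j))
       (upd (upd s i g1) j g2))).
  - intro s; unfold upd.
    rewrite <- !Nat.eqb_neq in hij, hki, hkj, hli, hlj.
    assert (hji : (j =? i) = false) by (rewrite Nat.eqb_sym; exact hij).
    rewrite hij, hji, hki, hkj, hli, hlj, !Nat.eqb_refl.
    split.
    + intros [g1 [g2 [e1 [e2 r]]]]; subst; exact r.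
    + intro r; exists (s k), (s l); auto.
  - set (P := (fun s'' : nat -> G => s'' i = s'' k /\ s'' j = s'' l /\ R (s'' i) (s'' j))).
    apply (def_exists H (fun s => exists g2, P (upd s j g2)) i).
    apply (def_exists H P j). unfold P.
    apply (def_and H); [apply (def_eq H)|apply (def_and H); [apply (def_eq H)|exact HR]].
Qed.

Lemma d_cl G add opp lt Def (H : @DefStructure G add opp lt Def) (R : G -> G -> Prop) c i k :
  i <> k -> Def (fun s => R (s k) (s i)) -> Def (fun s => R c (s i)).
Proof.
  intros hik HR.
  apply (def_ext H (fun s => exists g, (fun s' => s' k = c /\ R (s' k) (s' i)) (upd s k g))).
  - intro s; unfold upd. rewrite Nat.eqb_refl.
    rewrite <- Nat.eqb_neq in hik; rewrite hik.
    split; [intros [g [e r]]; subst; exact r| intro r; exists c; auto].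
  - apply (def_exists H (fun s' => s' k = c /\ R (s' k) (s' i)) k).
    apply (def_and H); [apply (def_const H)|exact HR].
Qed.

Lemma d_cr G add opp lt Def (H : @DefStructure G add opp lt Def) (R : G -> G -> Prop) c i k :
  i <> k -> Def (fun s => R (s i) (s k)) -> Def (fun s => R (s i) c).
Proof.
  intros hik HR.
  apply (@d_cl _ _ _ _ _ H (fun x y => R y x) c i k hik HR).
Qed.

Section Main.
Variables (G : Type) (add : G -> G -> G) (opp : G -> G) (zero : G)
    (lt : G -> G -> Prop) (HG : DOAG add opp zero lt).

Lemma irr x : ~ lt x x. Proof. apply (doag_irrefl HG). Qed.
Lemma tr x y z : lt x y -> lt y z -> lt x z. Proof. apply (doag_trans HG). Qed.
Lemma tot x y : lt x y \/ x = y \/ lt y x. Proof. apply (doag_total HG). Qed.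

Lemma le_tr x y z : le_of lt x y -> le_of lt y z -> le_of lt x z.
Proof. unfold le_of; intros [h|h] [h'|h']; subst; eauto using tr. Qed.
Lemma lt_le_tr x y z : lt x y -> le_of lt y z -> lt x z.
Proof. unfold le_of; intros h [h'|h']; subst; eauto using tr. Qed.
Lemma le_lt_tr x y z : le_of lt x y -> lt y z -> lt x z.
Proof. unfold le_of; intros [h|h] h'; subst; eauto using tr. Qed.
Lemma le_antis x y : le_of lt x y -> le_of lt y x -> x = y.
Proof. unfold le_of; intros [h|h] [h'|h']; auto. destruct (irr _ (tr _ _ _ h h')). Qed.
Lemma not_le x y : ~ le_of lt x y -> lt y x.
Proof. unfold le_of; intros h; destruct (tot x y) as [?|[?|?]]; tauto. Qed.
Lemma lt_not_le x y : lt y x -> ~ le_of lt x y.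
Proof. intros h h'; apply (irr _ (lt_le_tr _ _ _ h h')). Qed.
End Main.
Arguments irr {G add opp zero lt} HG x.
Arguments tr {G add opp zero lt} HG {x y z}.
Arguments tot {G add opp zero lt} HG x y.
Arguments le_tr {G add opp zero lt} HG {x y z}.
Arguments lt_le_tr {G add opp zero lt} HG {x y z}.
Arguments le_lt_tr {G add opp zero lt} HG {x y z}.
Arguments le_antis {G add opp zero lt} HG {x y}.
Arguments not_le {G add opp zero lt} HG {x y}.
Arguments lt_not_le {G add opp zero lt} HG {x y}.

Theorem theorem3p5 (G : Type) (add : G -> G -> G) (opp : G -> G) (zero : G)
    (lt : G -> G -> Prop) (Def : ((nat -> G) -> Prop) -> Prop)
    (HG : DOAG add opp zero lt)
    (HDef : DefStructure add opp lt Def)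
    (Hcomplete : definably_complete lt Def)
    (psi : G -> G -> Prop)
    (Hpsi_def : Def (fun s => psi (s 0) (s 1)))
    (Hpsi_pf : forall t, pseudo_finite lt Def (psi t))
    (Hpsi_mono : forall t1 t2 y, lt t1 t2 -> psi t1 y -> psi t2 y)
    (Hpsi_cover : forall y, exists t, psi t y) :
  forall a b, lt a b ->
  forall phi : G -> G -> Prop,
    Def (fun s => phi (s 0) (s 1)) ->
    (forall u, is_open lt (phi u)) ->
    (forall x, le_of lt a x -> le_of lt x b -> exists u, phi u x) ->
    exists t0, forall x, le_of lt a x -> le_of lt x b ->
      exists u, psi t0 u /\ phi u x.
Proof.
  intros a b hab phi Hphi_def Hopen Hcov.
  set (Cover := fun t x => forall y, le_of lt a y -> le_of lt y x -> exists u, psi t u /\ phi u y).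
  set (C := fun x => lt x a \/ exists t, Cover t x).
  assert (DC : def_set Def C).
  { unfold def_set.
    assert (P1 : Def (fun s => psi (s 1) (s 3) /\ phi (s 3) (s 2))).
    { apply (def_and HDef).
      - apply (@d_ren _ _ _ _ _ HDef psi 5 6); try discriminate.
        apply (@d_ren _ _ _ _ _ HDef psi 0 1); try discriminate. exact Hpsi_def.
      - apply (@d_ren _ _ _ _ _ HDef phi 5 6); try discriminate.
        apply (@d_ren _ _ _ _ _ HDef phi 0 1); try discriminate. exact Hphi_def. }
    pose proof (def_exists HDef _ 3 P1) as P2.
    assert (L : Def (fun s => (lt a (s 2) \/ a = s 2) /\ (lt (s 2) (s 0) \/ s 2 = s 0))).
    { apply (def_and HDef); apply (@d_or _ _ _ _ _ HDef).
      - apply (@d_cl _ _ _ _ _ HDef lt a 2 5); [discriminate|apply (def_lt HDef)].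
      - apply (def_ext HDef (fun s => s 2 = a)); [intro s; split; auto|apply (def_const HDef)].
      - apply (def_lt HDef).
      - apply (def_eq HDef). }
    pose proof (@d_imp _ _ _ _ _ HDef _ _ L P2) as P3.
    pose proof (@d_forall _ _ _ _ _ HDef _ 2 P3) as P4.
    pose proof (def_exists HDef _ 1 P4) as P5.
    assert (P0 : Def (fun s => lt (s 0) a)).
    { apply (@d_cr _ _ _ _ _ HDef lt a 0 5); [discriminate|apply (def_lt HDef)]. }
    pose proof (@d_or _ _ _ _ _ HDef _ _ P0 P5) as P6.
    revert P6; apply (def_ext HDef).
    intro s; unfold upd, C, Cover, le_of; simpl.
    split; (intros [h|[t h]]; [left; exact h|right; exists t; intros y]).
    + intros h1 h2; apply h; split; assumption.
    + intros [h1 h2]; apply h; assumption. }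
  assert (CovT : forall t t' x, le_of lt t t' -> Cover t x -> Cover t' x).
  { intros t t' x [ht|ht] hc y h1 h2; destruct (hc y h1 h2) as [u [hu1 hu2]];
      exists u; split; auto; [eapply Hpsi_mono; eauto | subst; auto]. }
  assert (CovD : forall t x x', le_of lt x' x -> Cover t x -> Cover t x').
  { intros t x x' hx hc y h1 h2; apply hc; auto; exact (le_tr HG h2 hx). }
  assert (Cdown : forall x y, C y -> le_of lt x y -> C x).
  { intros x y [h|[t h]] hxy.
    - left; exact (le_lt_tr HG hxy h).
    - right; exists t; eapply CovD; eauto. }
  assert (Ca : C a).
  { right. destruct (Hcov a (or_intror eq_refl) (or_introl hab)) as [u hu].
    destruct (Hpsi_cover u) as [t ht]. exists t.
    intros y h1 h2. rewrite <- (le_antis HG h1 h2). exists u; auto. }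
  destruct (classic (C b)) as [Cb|nCb].
  { destruct Cb as [h|[t h]].
    - destruct (irr HG _ (tr HG h hab)).
    - exists t; intros x h1 h2; apply (h x h1 h2). }
  exfalso.
  assert (Hm : exists m, is_lub lt C m).
  { apply NNPP; intro hn; apply (Hcomplete C DC).
    split; [split; [exists a; exact Ca| exact Cdown]|split; [exists b; exact nCb|exact hn]]. }
  destruct Hm as [m [Hub Hleast]].
  assert (ham : le_of lt a m) by (apply Hub, Ca).
  assert (hmb : le_of lt m b).
  { apply Hleast. intros x hx. apply NNPP; intro hn.
    apply nCb, (Cdown b x hx); left; exact (not_le HG hn). }
  destruct (Hcov m ham hmb) as [u0 hu0].
  destruct (Hopen u0 m hu0) as [c [d [hcm [hmd hcd]]]].
  destruct (Hpsi_cover u0) as [t1 ht1].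
  assert (hx : exists x, C x /\ lt c x).
  { apply NNPP; intro hn. apply (lt_not_le HG hcm). apply Hleast.
    intros x hx. apply NNPP; intro hn2. apply hn. exists x; split; auto.
    exact (not_le HG hn2). }
  destruct hx as [x [Cx hcx]].
  destruct (doag_dense HG m d hmd) as [y' [hmy hyd]].
  apply (lt_not_le HG hmy). apply Hub.
  destruct Cx as [hxa|[t hct]].
  - right; exists t1. intros y h1 h2. exists u0; split; auto.
    apply hcd; [exact (tr HG hcx (lt_le_tr HG hxa h1)) | exact (le_lt_tr HG h2 hyd)].
  - assert (HT : exists T, le_of lt t T /\ le_of lt t1 T).
    { destruct (tot HG t t1) as [h|[h|h]].
      - exists t1; split; [left; exact h|right; reflexivity].
      - exists t1; split; [right; exact h|right; reflexivity].
      - exists t; split; [right; reflexivity|left; exact h]. }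
    destruct HT as [T [hT hT1]].
    right; exists T. intros y h1 h2.
    destruct (classic (le_of lt y x)) as [hyx|hyx].
    + exact (CovT t T x hT hct y h1 hyx).
    + exists u0; split.
      * destruct hT1 as [h|h]; [eapply Hpsi_mono; eauto|subst; auto].
      * apply hcd; [exact (tr HG hcx (not_le HG hyx)) | exact (le_lt_tr HG h2 hyd)].
Qed.
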